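(* Let $\Delta\geq2$ be an integer and $n\geq2\Delta^4$, and let $G$ be a graph on $n$ vertices with $\Delta(G)\leq\Delta$. Then there exists a graph $\bar G$ with $V(\bar G)=V(G)$ and $E(\bar G)\supseteq E(G)$ such that $d_{\bar G}(v)\in\{\Delta,\Delta+1\}$ for every vertex $v$ and $\Delta_2(\bar G)\leq\max\{\Delta_2(G),1\}$.
   Context: $\Delta(G)$ is the maximum degree; $\Delta_2(G)$ is the maximum over distinct vertex pairs of the number of common neighbours. *)

(* Defs.v *)
From mathcomp Require Import all_boot all_order.
Set Implicit Arguments. Unset Strict Implicit. Unset Printing Implicit Defensive.

Definition simple_graph (T : finType) (e : rel T) : Prop :=
  symmetric e /\ irreflexive e.

Definition deg (T : finType) (e : rel T) (v : T) : nat := #|[set u | e v u]|.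

Definition codeg (T : finType) (e : rel T) (x y : T) : nat :=
  #|[set w | e x w && e y w]|.

Definition maxdeg (T : finType) (e : rel T) : nat := \max_(v : T) deg e v.

Definition maxcodeg (T : finType) (e : rel T) : nat :=
  \max_(p : T * T | p.1 != p.2) codeg e p.1 p.2.

Definition subgraph_edges (T : finType) (e e' : rel T) : Prop :=
  forall x y, e x y -> e' x y.

(* Main.v *)
Require Import Defs.
From mathcomp Require Import all_boot all_order.
From mathcomp Require Import zify.
Set Implicit Arguments. Unset Strict Implicit. Unset Printing Implicit Defensive.

Definition addE (T : finType) (e : rel T) (u v : T) : rel T :=
  fun x y => [|| e x y, (x == u) && (y == v) | (x == v) && (y == u)].

Lemma addEC (T : finType) (e : rel T) u v x y : addE e u v x y = addE e v u x y.
Proof. by rewrite /addE; case: (x == u); case: (x == v); case: (y==u); case: (y==v); rewrite /= ?orbT ?orbF. Qed.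

Lemma addE_simple (T : finType) (e : rel T) u v :
  simple_graph e -> u != v -> simple_graph (addE e u v).
Proof.
move=> [se ie] nuv; split.
- move=> x y; rewrite /addE se.
  by case: (x == u); case: (x == v); case: (y==u); case: (y==v); rewrite /= ?orbT ?orbF.
- move=> x; rewrite /addE ie /=.
  by case: (eqVneq x u) => [->|nxu]; rewrite ?eqxx ?(negbTE nuv) ?(negbTE nxu) ?andbF.
Qed.

Lemma addE_deg (T : finType) (e : rel T) u v z :
  simple_graph e -> u != v -> ~~ e u v ->
  deg (addE e u v) z = deg e z + (z == u) + (z == v).
Proof.
move=> [se ie] nuv nuv'; rewrite /deg.
case: (eqVneq z u) => [->|nzu].
- rewrite (negbTE nuv) addn0.
  have -> : [set y | addE e u v u y] = v |: [set y | e u y].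
    by apply/setP => y; rewrite !inE /addE eqxx (negbTE nuv) /= orbF orbC.
  by rewrite (cardsU1 v [set y | e u y]) inE (negbTE nuv') addnC.
case: (eqVneq z v) => [->|nzv].
- have -> : [set y | addE e u v v y] = u |: [set y | e v y].
    by apply/setP => y; rewrite !inE /addE eqxx eq_sym (negbTE nuv) /= orbC.
  by rewrite cardsU1 inE se (negbTE nuv') addnC addn0.
rewrite !addn0; apply: eq_card => y; rewrite !inE /addE.
by rewrite (negbTE nzu) (negbTE nzv) /= orbF.
Qed.

Definition condE (T : finType) (e : rel T) (u v : T) :=
  forall w, e v w -> forall t, ~~ (e u t && e w t).

Lemma H1 (T : finType) (e : rel T) u v :
  simple_graph e -> u != v -> condE e u v ->
  forall y, y != u -> e y v -> forall w, addE e u v u w -> addE e u v y w -> w = v.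
Proof.
move=> [se ie] nuv cnd y nyu eyv w.
have nyv : y != v by apply: contraTneq eyv => ->; rewrite ie.
rewrite /addE eqxx (negbTE nyu) (negbTE nyv) (negbTE nuv) /= ?andbF ?orbF.
move=> /orP [euw|/eqP //] eyw.
have := cnd y; rewrite se => /(_ eyv w); by rewrite euw eyw.
Qed.

Lemma H2 (T : finType) (e : rel T) u v :
  simple_graph e -> u != v -> condE e u v -> condE e v u ->
  forall x y w0, x != y -> addE e u v x w0 -> ~~ e x w0 -> addE e u v y w0 ->
  forall w, addE e u v x w -> addE e u v y w -> w = w0.
Proof.
move=> sg nuv c1 c2 x y w0 nxy axw nexw ayw w.
have := axw; rewrite {1}/addE (negbTE nexw) /=.
case/orP => /andP [/eqP ex /eqP ew]; subst x w0.
- have eyv : e y v.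
    by move: ayw; rewrite /addE eqxx [y == u]eq_sym (negbTE nxy) [v == u]eq_sym (negbTE nuv) /= ?andbF ?orbF.
  by apply: (H1 sg nuv c1 (y := y)) => //; rewrite eq_sym.
- have eyu : e y u.
    by move: ayw; rewrite /addE eqxx [y == v]eq_sym (negbTE nxy) (negbTE nuv) /= ?andbF ?orbF.
  rewrite !(addEC e u v).
  by apply: (H1 sg _ c2 (y := y)) => //; rewrite eq_sym.
Qed.

Lemma addE_codeg (T : finType) (e : rel T) u v k :
  simple_graph e -> u != v -> condE e u v -> condE e v u -> 1 <= k ->
  (forall x y, x != y -> codeg e x y <= k) ->
  forall x y, x != y -> codeg (addE e u v) x y <= k.
Proof.
move=> sg nuv c1 c2 k1 hk x y nxy; rewrite /codeg.
case: (boolP [forall w, (addE e u v x w && addE e u v y w) ==> (e x w && e y w)]).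
- move/forallP => H; apply: leq_trans (hk x y nxy); apply: subset_leq_card.
  by apply/subsetP => w; rewrite !inE => /(implyP (H w)).
- rewrite negb_forall => /existsP [w0]; rewrite negb_imply negb_and => /andP [/andP [axw ayw] ne].
  apply: leq_trans k1; rewrite -(cards1 w0); apply: subset_leq_card.
  apply/subsetP => w; rewrite !inE => /andP [axw' ayw']; apply/eqP.
  case/orP: ne => ne.
  + exact: (H2 sg nuv c1 c2 nxy axw ne ayw).
  + by apply: (H2 sg nuv c1 c2 (x := y) (y := x)) => //; rewrite eq_sym.
Qed.

Definition bad (T : finType) (e : rel T) (v : T) : {set T} :=
  [set u | (u == v) || [exists a, exists b, [&& e v a, e a b & e b u]]].

Lemma bad_props (T : finType) (e : rel T) u v : simple_graph e -> u \notin bad e v ->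
  [/\ u != v, ~~ e u v, condE e u v & condE e v u].
Proof.
move=> [se ie]; rewrite inE negb_or => /andP [nuv nex]; split => //.
- apply/negP => euv; move/negP: nex; apply; apply/existsP; exists u; apply/existsP; exists v.
  by rewrite /= [e v u]se euv.
- move=> w evw t; apply/negP => /andP [eut ewt]; move/negP: nex; apply.
  by apply/existsP; exists w; apply/existsP; exists t; rewrite /= evw ewt [e t u]se eut.
- move=> w euw t; apply/negP => /andP [evt ewt]; move/negP: nex; apply.
  by apply/existsP; exists t; apply/existsP; exists w; rewrite /= evt [e t w]se ewt [e w u]se euw.
Qed.

Lemma card_bigcup_le (I T : finType) (A : {set I}) (F : I -> {set T}) :
  #|\bigcup_(a in A) F a| <= \sum_(a in A) #|F a|.
Proof.
elim/big_ind2: _ => //; first by rewrite cards0.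
move=> X x Y y hx hy; case: (leq_card_setU x y) => h _; apply: leq_trans h _.
exact: leq_add.
Qed.

Definition N (T : finType) (e : rel T) (x : T) : {set T} := [set y | e x y].

Lemma card_bad (T : finType) (e : rel T) (D : nat) v :
  (forall z, deg e z <= D.+1) -> deg e v <= D.-1 ->
  #|bad e v| <= 1 + D.-1 * D.+1 * D.+1.
Proof.
move=> hd hv.
have sub : bad e v \subset v |: \bigcup_(a in N e v) \bigcup_(b in N e a) N e b.
  apply/subsetP => u; rewrite !inE => /orP [->//|/existsP [a /existsP [b /and3P [h1 h2 h3]]]].
  apply/orP; right; apply/bigcupP; exists a; first by rewrite inE.
  by apply/bigcupP; exists b; rewrite inE.
apply: leq_trans (subset_leq_card sub) _.
rewrite cardsU1; apply: leq_add; first by case: (_ \notin _).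
apply: leq_trans (card_bigcup_le _ _) _.
apply: leq_trans (_ : \sum_(a in N e v) (D.+1 * D.+1) <= _).
  apply: leq_sum => a _; apply: leq_trans (card_bigcup_le _ _) _.
  apply: leq_trans (_ : \sum_(b in N e a) D.+1 <= _).
    by apply: leq_sum => b _; apply: hd.
  by rewrite sum_nat_const leq_mul2r hd orbT.
by rewrite sum_nat_const -mulnA leq_mul2r hv orbT.
Qed.

Lemma sum_eq1 (T : finType) (a : T) : \sum_(z : T) ((z == a) : nat) = 1.
Proof. by rewrite (bigD1 a) //= eqxx big1 // => z /negbTE ->. Qed.

Lemma sum_shift_le (T : finType) (f g : T -> nat) a :
  (forall z, f z + (z == a) <= g z) -> \sum_z f z + 1 <= \sum_z g z.
Proof.
move=> h; rewrite -(sum_eq1 a) -big_split /=; exact: leq_sum.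
Qed.

Lemma sum_shift_eq (T : finType) (f g : T -> nat) a :
  (forall z, f z + (z == a) = g z) -> \sum_z f z + 1 = \sum_z g z.
Proof.
move=> h; rewrite -(sum_eq1 a) -big_split /=; exact: eq_bigr.
Qed.

Definition sdef (D : nat) (T : finType) (e : rel T) := \sum_(z : T) (D - deg e z).
Definition D1 (D : nat) (T : finType) (e : rel T) := [set z | deg e z == D.+1].

Lemma deg_cases (T : finType) (e : rel T) u v z :
  simple_graph e -> u != v -> ~~ e u v ->
  [\/ z = u /\ deg (addE e u v) z = (deg e z).+1,
      z = v /\ deg (addE e u v) z = (deg e z).+1 |
      [/\ z != u, z != v & deg (addE e u v) z = deg e z]].
Proof.
move=> sg nuv neuv; rewrite addE_deg //.
case: (eqVneq z u) => [->|nzu]; first by apply: Or31; rewrite (negbTE nuv) addn0 addn1.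
case: (eqVneq z v) => [->|nzv]; first by apply: Or32; rewrite addn0 addn1.
by apply: Or33; rewrite !addn0.
Qed.

Definition Good (D k M : nat) (T : finType) (e0 e : rel T) :=
  [/\ simple_graph e, subgraph_edges e0 e, forall z, deg e z <= D.+1,
      forall x y, x != y -> codeg e x y <= k &
      (#|D1 D e| = 0 \/ #|D1 D e| + sdef D e <= M)].

Definition Final (D k : nat) (T : finType) (e0 e : rel T) :=
  [/\ simple_graph e, subgraph_edges e0 e, (forall v, deg e v = D \/ deg e v = D.+1) &
      forall x y, x != y -> codeg e x y <= k].

Lemma main (D k M : nat) (T : finType) (e0 : rel T) :
  2 <= D -> 1 <= k -> M = D * (1 + D.-1 * D.+1 * D.+1) ->
  (1 + D.-1 * D.+1 * D.+1) * D.+1 <= #|T| ->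
  forall m (e : rel T), sdef D e <= m -> Good D k M e0 e -> exists e', Final D k e0 e'.
Proof.
move=> D2 k1 hM hT; set B := 1 + D.-1 * D.+1 * D.+1 in hM hT.
elim=> [|m IH] e hs [sg sub hd hc hinv].
- exists e; split => // v; have : D - deg e v <= 0.
    apply: leq_trans hs; rewrite /sdef (bigD1 v) //=; exact: leq_addr.
  by have := hd v; lia.
case: (pickP (fun v => deg e v < D)) => [v hv|hnone]; last first.
  exists e; split => // z; have := hnone z; have := hd z; move=> /= a b; lia.
have step : forall u, u \notin bad e v -> deg e u <= D ->
   [/\ simple_graph (addE e u v),
       subgraph_edges e0 (addE e u v), (forall z, deg (addE e u v) z <= D.+1) &
       [/\ forall x y, x != y -> codeg (addE e u v) x y <= k,
           sdef D (addE e u v) + 1 <= sdef D e &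
           forall z, (z == u) || (z == v) || (deg (addE e u v) z == deg e z)]].
  move=> u hu hdu; have [nuv neuv c1 c2] := bad_props sg hu.
  split.
  - exact: addE_simple.
  - by move=> x y /sub exy; rewrite /addE exy.
  - move=> z; have [[-> ->]|[-> ->]|[_ _ ->]] := deg_cases z sg nuv neuv => //; lia.
  split.
  - exact: addE_codeg.
  - apply: (sum_shift_le (a := v)) => z.
    have [[-> ->]|[-> ->]|[_ nzv ->]] := deg_cases z sg nuv neuv.
    + rewrite (negbTE nuv) /=; lia.
    + rewrite eqxx /=; lia.
    + by rewrite (negbTE nzv) addn0.
  - move=> z; have [[-> _]|[-> _]|[_ _ ->]] := deg_cases z sg nuv neuv;
      by rewrite ?eqxx ?orbT.
have hsv : 1 <= sdef D e.
  rewrite /sdef (bigD1 v) //=; apply: leq_trans (leq_addr _ _); lia.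
case: (pickP (fun u => (deg e u < D) && (u \notin bad e v))) => [u /andP [hu hub]|hnone2].
- have [sg2 sub2 hd2 [hc2 hs2 hz]] := step u hub (ltnW hu).
  apply: (IH (addE e u v)); first by lia.
  split => //.
  have eqD1 : D1 D (addE e u v) = D1 D e.
    apply/setP => z; rewrite !inE; case/orP: (hz z) => [/orP [/eqP ->|/eqP ->]|/eqP ->] //.
    + have [nuv neuv _ _] := bad_props sg hub.
      rewrite addE_deg // eqxx (negbTE nuv) /=; lia.
    + have [nuv neuv _ _] := bad_props sg hub.
      rewrite addE_deg // [v == u]eq_sym (negbTE nuv) eqxx /=; lia.
  rewrite eqD1; case: hinv => [->|h]; [by left | right; lia].
have inbad : forall z, deg e z < D -> z \in bad e v.
  by move=> z hz; have := hnone2 z; rewrite hz /= => /negbFE.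
have cb : #|bad e v| <= B.
  apply: card_bad => //; lia.
have sdefB : #|D1 D e| = 0 -> sdef D e <= M.
  move=> _; rewrite hM; apply: leq_trans (_ : \sum_(z in bad e v) D <= _); last first.
    by rewrite sum_nat_const mulnC leq_mul2l cb orbT.
  rewrite big_mkcond; apply: leq_sum => z _; case: ifP => zb; first exact: leq_subr.
  have : ~~ (deg e z < D) by apply/negP => /inbad; rewrite zb.
  lia.
case: (pickP (fun u => (deg e u == D) && (u \notin bad e v))) => [u /andP [/eqP hu hub]|hnone3].
- have [sg2 sub2 hd2 [hc2 hs2 hz]] := step u hub (eq_leq hu).
  have [nuv neuv _ _] := bad_props sg hub.
  apply: (IH (addE e u v)); first by lia.
  split => //.
  have eqD1 : D1 D (addE e u v) = u |: D1 D e.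
    apply/setP => z; rewrite !inE; have [[-> ->]|[-> ->]|[nzu _ ->]] := deg_cases z sg nuv neuv.
    + by rewrite hu !eqxx.
    + by rewrite [v == u]eq_sym (negbTE nuv) eqSS (ltn_eqF hv) (ltn_eqF (leqW hv)).
    + by rewrite (negbTE nzu).
  have sd : sdef D (addE e u v) + 1 = sdef D e.
    apply: (sum_shift_eq (a := v)) => z.
    have [[-> ->]|[-> ->]|[_ nzv ->]] := deg_cases z sg nuv neuv.
    + rewrite (negbTE nuv) /=; lia.
    + rewrite eqxx /=; lia.
    + by rewrite (negbTE nzv) addn0.
  have cD : #|D1 D (addE e u v)| = #|D1 D e| + 1.
    rewrite eqD1 cardsU1 inE hu; lia.
  right; case: hinv => [h|h]; [have := sdefB h | idtac]; lia.
exfalso.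
have : [set: T] \subset bad e v :|: D1 D e.
  apply/subsetP => z _; rewrite in_setU; case: (boolP (z \in bad e v)) => //= zb; rewrite inE.
  have := hnone3 z; rewrite /= (negbTE zb) /= andbT => /negbT hz.
  have : ~~ (deg e z < D) by apply/negP => /inbad; rewrite (negbTE zb) /=.
  have := hd z; lia.
move/subset_leq_card; rewrite cardsT => hTle.
case: (leq_card_setU (bad e v) (D1 D e)) => hU _.
have hMB : M = D * B by [].
case: hinv => h; nia.
Qed.

Lemma arith D : 2 <= D -> (1 + D.-1 * D.+1 * D.+1) * D.+1 <= 2 * D ^ 4.
Proof.
case: D => [|[|d]] // _; rewrite /=.
nia.
Qed.

Theorem lemma4p2 (D n : nat) (T : finType) (e : rel T) :
  2 <= D -> 2 * D ^ 4 <= n -> #|T| = n ->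
  simple_graph e -> maxdeg e <= D ->
  exists e' : rel T,
    [/\ simple_graph e', subgraph_edges e e',
        (forall v : T, deg e' v = D \/ deg e' v = D.+1) &
        maxcodeg e' <= maxn (maxcodeg e) 1].
Proof.
move=> D2 hn hT sg hmd.
have hdeg : forall z, deg e z <= D.
  move=> z; apply: leq_trans hmd; exact: (leq_bigmax (F := fun v => deg e v) z).
have hG : Good D (maxn (maxcodeg e) 1) (D * (1 + D.-1 * D.+1 * D.+1)) e e.
  split => //.
  + by move=> z; apply: leq_trans (hdeg z) _.
  + move=> x y nxy; apply: leq_trans (leq_maxl _ _).
    exact: (leq_bigmax_cond (P := fun p : T * T => p.1 != p.2) (F := fun p => codeg e p.1 p.2) (x, y) nxy).
  + left; apply/eqP; rewrite cards_eq0; apply/eqP/setP => z; rewrite !inE.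
    by have := hdeg z; lia.
have [e' [sg' sub' hd' hc']] := @main D (maxn (maxcodeg e) 1) (D * (1 + D.-1 * D.+1 * D.+1)) T e
  D2 (leq_maxr _ _) erefl (leq_trans (arith D2) (leq_trans hn (eq_leq (esym hT))))
  (sdef D e) e (leqnn _) hG.
exists e'; split => //.
by apply/bigmax_leqP => -[x y] /= nxy; apply: hc'.
Qed.
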